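(* Let $\rho$ be a congruence on $\mathcal{OR}_n$ and let $\sigma\in\mathcal{OR}_n$ with $\mathrm{rk}(\sigma)=k$. Suppose there exists $\tau\in\mathcal{OR}_n$ with $\tau\neq\sigma$ and $\tau\,\rho\,\sigma$. Then: if $k=n$, $\rho(0)\supseteq\mathcal I_m^{\rm I}$ or $\rho(0)\supseteq\mathcal I_m^{\rm II}$; if $0\le k\le m$, $\rho(0)\supseteq\mathcal I_{k-1}$, where $\mathcal I_{-1}=\emptyset$.
   Context: Let $m\ge 1$, $n=2m$, $\mathbf n=\{1,\dots,n\}$, $\theta(i)=n+1-i$, written $\bar i$. A proper subset $I\subset\mathbf n$ is admissible if $I\cap\theta(I)=\emptyset$; $\mathbf n$ and $\emptyset$ are also admissible. For an injective partial map $\sigma$ of $\mathbf n$, $I(\sigma)$ is its domain, $J(\sigma)$ its image, $\mathrm{rk}(\sigma)=|I(\sigma)|$; products are compositions of partial maps. $W=\{\sigma\in S_n:\sigma(\bar i)=\overline{\sigma(i)}\ \forall i\}$, $W'=\{\sigma\in W:|\sigma(\{1,\dots,m\})\cap\{m+1,\dots,n\}|\text{ even}\}$. An admissible $m$-subset is of type I if it contains an even number of elements $>m$, type II otherwise. $\mathcal{OR}_n$ consists of the injective partial maps $\sigma$ with: $\mathrm{rk}(\sigma)<m$ and $I(\sigma),J(\sigma)$ admissible; or $\mathrm{rk}(\sigma)=m$ and $I(\sigma),J(\sigma)$ admissible of the same type; or $\sigma\in W'$. For $\mathrm{rk}(\sigma)=m$, $\mathrm{tp}(\sigma)$ is the type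 of $I(\sigma)$. $\mathcal I_k=\{\sigma:\mathrm{rk}(\sigma)\le k\}$ for $k\in\{0,\dots,m-1,n\}$; $\mathcal I_m^{\rm I}=\{\sigma:\mathrm{rk}(\sigma)<m$, or $\mathrm{rk}(\sigma)=m$ and $\mathrm{tp}(\sigma)={\rm I}\}$, $\mathcal I_m^{\rm II}$ likewise with type II. $0$ is the empty map and $\rho(0)$ its $\rho$-class. *)

(* Defs.v *)
(* Points of n = {1..n} are encoded as 'I_n (0-indexed),
   with n = m.*2; the point i (1-indexed) is the ordinal i-1. *)
From mathcomp Require Import all_boot.
Set Implicit Arguments. Unset Strict Implicit. Unset Printing Implicit Defensive.

Section Defs.
Variable m : nat.
Local Notation n := (m.*2).

Definition ptmap := {ffun 'I_n -> option 'I_n}.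

(* theta(i) = n+1-i in 1-indexed form, i.e. n-1-i in 0-indexed form *)
Definition theta (i : 'I_n) : 'I_n := rev_ord i.

Definition pinjective (s : ptmap) : bool :=
  [forall x, forall y, (s x != None) ==> (s x == s y) ==> (x == y)].

Definition dom (s : ptmap) : {set 'I_n} := [set x | s x != None].
Definition pimg (s : ptmap) (A : {set 'I_n}) : {set 'I_n} :=
  [set y | [exists x in A, s x == Some y]].
Definition img (s : ptmap) : {set 'I_n} := pimg s setT.
Definition rk (s : ptmap) : nat := #|dom s|.

(* composition of partial maps: first s, then t *)
Definition pmul (s t : ptmap) : ptmap :=
  [ffun x => if s x is Some y then t y else None].

Definition empty_map : ptmap := [ffun _ => None].

(* admissible: the whole set, or I ∩ θ(I) = ∅ (this includes ∅; such an I
   is automatically proper since n >= 2 under m >= 1) *)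
Definition admissible (I : {set 'I_n}) : bool :=
  (I == setT) || [disjoint I & theta @: I].

(* elements > m (1-indexed) are the ordinals with value >= m *)
Definition upper (I : {set 'I_n}) : {set 'I_n} := [set x in I | m <= x].

Definition typeI (I : {set 'I_n}) : bool := ~~ odd #|upper I|.

Definition lowerhalf : {set 'I_n} := [set x : 'I_n | x < m].

Definition inW (s : ptmap) : bool :=
  [forall x, s x != None] && pinjective s &&
  [forall i, s (theta i) == omap theta (s i)].

Definition inW' (s : ptmap) : bool :=
  inW s && ~~ odd #|upper (pimg s lowerhalf)|.

Definition inOR (s : ptmap) : bool :=
  pinjective s &&
  [|| (rk s < m) && admissible (dom s) && admissible (img s),
      [&& rk s == m, admissible (dom s), admissible (img s)
        & typeI (dom s) == typeI (img s)]
    | inW' s].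

Definition congruence_OR (rho : ptmap -> ptmap -> Prop) : Prop :=
  [/\ forall a b, rho a b -> inOR a /\ inOR b,
      forall a, inOR a -> rho a a,
      forall a b, rho a b -> rho b a,
      forall a b c, rho a b -> rho b c -> rho a c
    & forall a b c, rho a b -> inOR c ->
        rho (pmul c a) (pmul c b) /\ rho (pmul a c) (pmul b c)].

Definition in_Ik (k : nat) (s : ptmap) : bool := inOR s && (rk s <= k).
Definition in_ImI (s : ptmap) : bool :=
  inOR s && ((rk s < m) || ((rk s == m) && typeI (dom s))).
Definition in_ImII (s : ptmap) : bool :=
  inOR s && ((rk s < m) || ((rk s == m) && ~~ typeI (dom s))).

End Defs.

(* Main.v *)
Require Import Defs.
From mathcomp Require Import all_boot zify.
Set Implicit Arguments. Unset Strict Implicit. Unset Printing Implicit Defensive.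

Definition pid (m : nat) (A : {set 'I_(m.*2)}) : ptmap m :=
  [ffun x => if x \in A then Some x else None].
Definition pinv (m : nat) (s : ptmap m) : ptmap m :=
  [ffun y => [pick x | s x == Some y]].
Definition adm' (m : nat) (A : {set 'I_(m.*2)}) : bool :=
  [disjoint A & @theta m @: A].

Lemma pmulE m (s t : ptmap m) x : pmul s t x = if s x is Some y then t y else None.
Proof. by rewrite /pmul ffunE. Qed.
Lemma pidE m (A : {set 'I_(m.*2)}) x : pid A x = if x \in A then Some x else None.
Proof. by rewrite ffunE. Qed.
Lemma domE m (s : ptmap m) x : (x \in dom s) = (s x != None).
Proof. by rewrite inE. Qed.
Lemma imgP m (s : ptmap m) y : reflect (exists x, s x = Some y) (y \in img s).
Proof.
rewrite inE; apply: (iffP existsP) => [[x /andP[_ /eqP h]]|[x h]]; exists x => //.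
by rewrite inE h eqxx.
Qed.
Lemma pmulA m (a b c : ptmap m) : pmul (pmul a b) c = pmul a (pmul b c).
Proof. apply/ffunP => x; rewrite !pmulE; case: (a x) => // y; by rewrite pmulE. Qed.
Lemma pmul0l m (a : ptmap m) : pmul (empty_map m) a = empty_map m.
Proof. by apply/ffunP => x; rewrite pmulE !ffunE. Qed.
Lemma pmul0r m (a : ptmap m) : pmul a (empty_map m) = empty_map m.
Proof. apply/ffunP => x; rewrite pmulE !ffunE; by case: (a x) => // y; rewrite ffunE. Qed.

Lemma pinjP m (s : ptmap m) : reflect (forall x y z, s x = Some z -> s y = Some z -> x = y) (pinjective s).
Proof.
apply: (iffP forallP) => [h x y z hx hy|h x].
  by move/forallP: (h x) => /(_ y); rewrite hx hy eqxx /= => /eqP.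
apply/forallP => y; apply/implyP => hx; apply/implyP => /eqP hxy.
by case E: (s x) hx hxy => [z|] // _ hy; apply/eqP; apply: (h x y z).
Qed.

Lemma pinvE m (s : ptmap m) (hs : pinjective s) y x : (pinv s y == Some x) = (s x == Some y).
Proof.
rewrite ffunE; case: pickP => [z /eqP hz|h].
  apply/eqP/eqP => [[<-]//|hx]; congr Some; exact: (pinjP _ hs) hz hx.
by rewrite h.
Qed.
Lemma pinvP m (s : ptmap m) (hs : pinjective s) y x : pinv s y = Some x <-> s x = Some y.
Proof. by split => h; apply/eqP; [rewrite -pinvE // | rewrite pinvE //]; apply/eqP. Qed.

Lemma pinv_inj m (s : ptmap m) : pinjective s -> pinjective (pinv s).
Proof.
move=> hs; apply/pinjP => x y z /(pinvP hs) h1 /(pinvP hs); by rewrite h1 => -[].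
Qed.
Lemma dom_pinv m (s : ptmap m) : pinjective s -> dom (pinv s) = img s.
Proof.
move=> hs; apply/setP => y; rewrite domE; apply/idP/imgP => [|[x /(pinvP hs) ->]//].
by case E: (pinv s y) => [x|] // _; exists x; apply/(pinvP hs).
Qed.
Lemma img_pinv m (s : ptmap m) : pinjective s -> img (pinv s) = dom s.
Proof.
move=> hs; apply/setP => x; rewrite domE; apply/imgP/idP => [[y /(pinvP hs) ->]//|].
by case E: (s x) => [y|] // _; exists y; apply/(pinvP hs).
Qed.
Lemma pmul_pinv m (s : ptmap m) : pinjective s -> pmul s (pinv s) = pid (dom s).
Proof.
move=> hs; apply/ffunP => x; rewrite pmulE pidE domE.
by case E: (s x) => [y|] //=; apply/(pinvP hs).
Qed.
Lemma pinv_pmul m (s : ptmap m) : pinjective s -> pmul (pinv s) s = pid (img s).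
Proof.
move=> hs; apply/ffunP => y; rewrite pmulE pidE.
case E: (pinv s y) => [x|]; move: E.
  move/(pinvP hs) => hx; case: ifP => //; move/imgP; case; by exists x.
move=> hN; case: ifP => // /imgP [x hx]; move/(pinvP hs): hx; by rewrite hN.
Qed.
Lemma pid_doml m (s : ptmap m) : pmul (pid (dom s)) s = s.
Proof. apply/ffunP => x; rewrite pmulE pidE domE; case E: (s x) => [y|] /=; by rewrite ?E. Qed.
Lemma pid_imgr m (s : ptmap m) (B : {set 'I_(m.*2)}) : img s \subset B -> pmul s (pid B) = s.
Proof.
move=> /subsetP hB; apply/ffunP => x; rewrite pmulE.
case E: (s x) => [y|] //; rewrite pidE hB //; by apply/imgP; exists x.
Qed.
Lemma pid_pid m (A B : {set 'I_(m.*2)}) : pmul (pid A) (pid B) = pid (A :&: B).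
Proof. apply/ffunP => x; rewrite pmulE !pidE inE; by case: (x \in A); rewrite ?pidE. Qed.

Lemma pmul_inj m (s t : ptmap m) : pinjective s -> pinjective t -> pinjective (pmul s t).
Proof.
move=> /pinjP hs /pinjP ht; apply/pinjP => x y z; rewrite !pmulE.
case Ex: (s x) => [a|] //; case Ey: (s y) => [b|] // h1 h2.
have eab := ht _ _ _ h1 h2; subst b; exact: hs Ex Ey.
Qed.

Lemma card_img m (s : ptmap m) : pinjective s -> #|img s| = rk s.
Proof.
move=> hs; rewrite /rk.
have -> : img s = (fun x => odflt x (s x)) @: dom s.
  apply/setP => y; apply/imgP/imsetP => [[x hx]|[x]].
    by exists x; rewrite ?domE hx.
  by rewrite domE; case E: (s x) => [z|] //= _ ->; exists x.
apply: card_in_imset => x y; rewrite !domE.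
case Ex: (s x) => [a|] //; case Ey: (s y) => [b|] //= _ _ eab; subst b.
exact: (pinjP _ hs) Ex Ey.
Qed.

Lemma thetaK m (i : 'I_(m.*2)) : theta (theta i) = i.
Proof. exact: rev_ordK. Qed.
Lemma theta_inj m : injective (@theta m).
Proof. exact: rev_ord_inj. Qed.
Lemma theta_val m (i : 'I_(m.*2)) : val (theta i) = m.*2 - i.+1.
Proof. by []. Qed.
Lemma mem_theta m (A : {set 'I_(m.*2)}) i : (i \in @theta m @: A) = (theta i \in A).
Proof. by rewrite -{1}(thetaK i) (mem_imset _ _ (@theta_inj m)). Qed.

Lemma adm'P m (A : {set 'I_(m.*2)}) :
  reflect (forall i, i \in A -> theta i \in A -> False) (adm' A).
Proof.
rewrite /adm' disjoints_subset; apply: (iffP subsetP) => h i hi.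
  by move=> ht; move: (h i hi); rewrite inE mem_theta ht.
rewrite inE mem_theta; apply/negP => ht; exact: h i hi ht.
Qed.
Lemma adm'_sub m (A B : {set 'I_(m.*2)}) : B \subset A -> adm' A -> adm' B.
Proof.
move=> /subsetP hs /adm'P h; apply/adm'P => i hi ht; exact: (h i (hs _ hi) (hs _ ht)).
Qed.
Lemma adm'_theta m (A : {set 'I_(m.*2)}) : adm' A -> adm' (@theta m @: A).
Proof.
move=> /adm'P h; apply/adm'P => i; rewrite !mem_theta thetaK => h1 h2; exact: (h _ h2).
Qed.
Lemma card_theta m (A : {set 'I_(m.*2)}) : #|@theta m @: A| = #|A|.
Proof. exact: (card_imset _ (@theta_inj m)). Qed.

Lemma card_adm' m (A : {set 'I_(m.*2)}) : adm' A -> #|A| <= m.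
Proof.
move=> h; have := max_card (A :|: @theta m @: A).
rewrite cardsU card_theta card_ord.
rewrite (disjoint_setI0 h).
rewrite cards0 subn0 addnn leq_double //.
Qed.

Lemma adm_adm' m (A : {set 'I_(m.*2)}) : admissible A -> #|A| < m.*2 -> adm' A.
Proof.
case/orP => [/eqP -> |//]; by rewrite cardsT card_ord ltnn.
Qed.

Definition tot m (s : ptmap m) := [forall x, s x != None].

Lemma tot_rk m (s : ptmap m) : tot s -> rk s = m.*2.
Proof.
move/forallP => h; rewrite /rk.
have -> : dom s = setT by apply/setP => x; rewrite domE h inE.
by rewrite cardsT card_ord.
Qed.

Lemma inOR_ntot m (s : ptmap m) : 0 < m -> inOR s -> ~~ tot s -> rk s <= m.
Proof.
move=> hm hs hnt; move: hs.
move=> /andP[_ /or3P[/andP[/andP[h _] _]|/and4P[/eqP-> _ _ _]|/andP[/andP[/andP[ht _] _] _]]].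
- exact: ltnW.
- by [].
- by rewrite /tot ht in hnt.
Qed.

Lemma inOR_small m (s : ptmap m) : 0 < m -> inOR s -> rk s <= m ->
  [/\ pinjective s, adm' (dom s), adm' (img s) & (rk s = m -> typeI (dom s) = typeI (img s))].
Proof.
move=> hm hs hr; have hd : #|dom s| < m.*2 by rewrite /rk in hr; lia.
have hi : pinjective s by case/andP: hs.
have hi2 : #|img s| < m.*2 by rewrite card_img //; lia.
case/andP: hs => _ /or3P[/andP[/andP[h1 h2] h3]|/and4P[/eqP h1 h2 h3 /eqP h4]|/andP[/andP[/andP[ht _] _] _]].
- split => //; try exact: adm_adm'; move=> e; by rewrite e ltnn in h1.
- by split => //; exact: adm_adm'.
- have := tot_rk ht; lia.
Qed.

Lemma inOR_mk1 m (s : ptmap m) : pinjective s -> adm' (dom s) -> adm' (img s) -> rk s < m -> inOR s.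
Proof. by move=> h1 h2 h3 h4; rewrite /adm' in h2 h3; rewrite /inOR h1 /admissible h2 h3 h4 !orbT. Qed.
Lemma inOR_mk2 m (s : ptmap m) : pinjective s -> adm' (dom s) -> adm' (img s) -> rk s = m ->
  typeI (dom s) = typeI (img s) -> inOR s.
Proof.
by move=> h1 h2 h3 h4 h5; rewrite /adm' in h2 h3; rewrite /inOR h1 /admissible h2 h3 h4 h5 eqxx !orbT /=; apply/or3P; apply: Or32.
Qed.

Lemma pid_inj m (A : {set 'I_(m.*2)}) : pinjective (pid A).
Proof. apply/pinjP => x y z; rewrite !pidE; do 2 case: ifP => //; by move=> _ _ [->] [->]. Qed.
Lemma dom_pid m (A : {set 'I_(m.*2)}) : dom (pid A) = A.
Proof. apply/setP => x; rewrite domE pidE; by case: ifP. Qed.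
Lemma img_pid m (A : {set 'I_(m.*2)}) : img (pid A) = A.
Proof.
apply/setP => x; apply/imgP/idP => [[y]|hx]; last by exists x; rewrite pidE hx.
by rewrite pidE; case: ifP => // h [<-].
Qed.
Lemma rk_pid m (A : {set 'I_(m.*2)}) : rk (pid A) = #|A|.
Proof. by rewrite /rk dom_pid. Qed.

Lemma inOR_pid m (A : {set 'I_(m.*2)}) : adm' A -> #|A| <= m -> inOR (pid A).
Proof.
move=> h1 h2; case: (ltnP #|A| m) => h3.
  by apply: inOR_mk1; rewrite ?dom_pid ?img_pid ?rk_pid ?pid_inj.
by apply: inOR_mk2; rewrite ?dom_pid ?img_pid ?rk_pid ?pid_inj //; apply/eqP; rewrite eqn_leq h2.
Qed.

Lemma inOR_empty m : 0 < m -> inOR (empty_map m).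
Proof.
move=> hm; have -> : empty_map m = pid set0 by apply/ffunP => x; rewrite pidE !ffunE inE.
by apply: inOR_pid; rewrite ?cards0 //; apply/adm'P => i; rewrite inE.
Qed.

Lemma rk0 m (s : ptmap m) : rk s = 0 -> s = empty_map m.
Proof.
move/eqP; rewrite /rk cards_eq0 => /eqP h; apply/ffunP => x; rewrite ffunE.
by apply/eqP; rewrite -[_ == _]negbK -domE h inE.
Qed.

Definition fsel (m x z : nat) (k : nat) : bool :=
  if [|| k == x, k == z, m.*2 - k.+1 == x | m.*2 - k.+1 == z]
  then (k == x) || (k == z) else k < m.

Lemma fsel_disj m x y k : x < m.*2 -> y < m.*2 -> x != y -> k < m.*2 ->
  fsel m x (m.*2 - y.+1) k -> fsel m x (m.*2 - y.+1) (m.*2 - k.+1) -> False.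
Proof.
rewrite /fsel -!addnn => hx hy hxy hk.
case: (k =P x); case: (k =P (m + m - y.+1)); case: (m + m - k.+1 =P x);
case: (m + m - k.+1 =P (m + m - y.+1));
case: ((m + m - (m + m - k.+1).+1) =P x); case: ((m + m - (m + m - k.+1).+1) =P (m + m - y.+1));
move: hxy; rewrite /= ?orbT ?orbF => /eqP hxy; lia.
Qed.

Lemma fsel_cov m x y k : x < m.*2 -> y < m.*2 -> x != y -> k < m.*2 ->
  fsel m x (m.*2 - y.+1) k || fsel m x (m.*2 - y.+1) (m.*2 - k.+1).
Proof.
rewrite /fsel -!addnn => hx hy hxy hk.
case: (k =P x); case: (k =P (m + m - y.+1)); case: (m + m - k.+1 =P x);
case: (m + m - k.+1 =P (m + m - y.+1));
case: ((m + m - (m + m - k.+1).+1) =P x); case: ((m + m - (m + m - k.+1).+1) =P (m + m - y.+1));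
move: hxy; rewrite /= ?orbT ?orbF => /eqP hxy; try lia;
move=> *; apply/orP; lia.
Qed.



Lemma ext_adm m (x y : 'I_(m.*2)) : x != y ->
  exists C : {set 'I_(m.*2)}, [/\ x \in C, theta y \in C, adm' C & #|C| = m].
Proof.
move=> hxy.
have hxy' : (val x != val y) by [].
pose C := [set i : 'I_(m.*2) | fsel m x (m.*2 - y.+1) i].
have mC i : (i \in C) = fsel m x (m.*2 - y.+1) i by rewrite inE.
have mtC i : (theta i \in C) = fsel m x (m.*2 - y.+1) (m.*2 - i.+1) by rewrite inE.
have hadm : adm' C.
  apply/adm'P => i h1 h2; move: h1 h2; rewrite (mC i) (mtC i).
  apply: fsel_disj => //; exact: ltn_ord.
exists C; split => //.
- by rewrite (mC x) /fsel eqxx.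
- by rewrite (mC (theta y)) /fsel theta_val eqxx !orbT.
- have hU : C :|: @theta m @: C = setT.
    apply/setP => i; rewrite in_setU mem_theta (mtC i) (mC i) in_setT.
    by apply: fsel_cov => //; exact: ltn_ord.
  have := cardsU C (@theta m @: C).
  rewrite hU cardsT card_ord card_theta.
  move/adm'P: hadm => hd.
  have -> : C :&: @theta m @: C = set0.
    apply/setP => i; rewrite in_setI mem_theta in_set0; apply/negP => /andP[h1 h2]; exact: hd i h1 h2.
  rewrite cards0 subn0 => h; have : m + m = #|C| + #|C| by rewrite addnn. lia.
Qed.

Lemma exists_inj m (D E : {set 'I_(m.*2)}) : #|D| <= #|E| ->
  exists g : ptmap m, [/\ pinjective g, dom g = D & img g \subset E].
Proof.
move=> hc.
pose g : ptmap m := [ffun x => if x \in D then Some (nth x (enum E) (index x (enum D))) else None].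
have hlt x : x \in D -> index x (enum D) < size (enum E).
  move=> hx; rewrite -cardE; apply: leq_trans hc; rewrite cardE index_mem mem_enum //.
exists g; split.
- apply/pinjP => x y z; rewrite !ffunE.
  case: ifP => hx //; case: ifP => hy // [<-] [].
  rewrite (set_nth_default y x (hlt _ hx)).
  move/eqP; rewrite nth_uniq ?enum_uniq ?hlt // => /eqP hi.
  have ex : x \in enum D by rewrite mem_enum.
  have ey : y \in enum D by rewrite mem_enum.
  by rewrite -(nth_index x ex) -(nth_index x ey) hi.
- by apply/setP => x; rewrite domE ffunE; case: ifP.
- apply/subsetP => z /imgP [x]; rewrite ffunE; case: ifP => // hx [<-].
  by rewrite -mem_enum mem_nth ?hlt.
Qed.

Lemma dom_pmul_sub m (g s : ptmap m) : img g \subset dom s -> dom (pmul g s) = dom g.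
Proof.
move/subsetP=> h; apply/setP => x; rewrite !domE pmulE.
case E: (g x) => [y|] //=; rewrite -domE h //; apply/imgP; by exists x.
Qed.
Lemma img_pmul_sub m (g s : ptmap m) : img (pmul g s) \subset img s.
Proof.
apply/subsetP => z /imgP [x]; rewrite pmulE; case: (g x) => // y h; apply/imgP; by exists y.
Qed.
Lemma dom_pmul_subl m (g s : ptmap m) : dom (pmul g s) \subset dom g.
Proof. apply/subsetP => x; rewrite !domE pmulE; by case: (g x). Qed.

Lemma eq_card_sub m (A B : {set 'I_(m.*2)}) : A \subset B -> #|B| <= #|A| -> A = B.
Proof. by move=> h1 h2; apply/eqP; rewrite eqEcard h1 h2. Qed.

Lemma nat_sq (a b c : nat) : a = c -> a <= b -> b <= c -> b = c.
Proof. lia. Qed.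
Lemma nat_le3 (a b c : nat) : a = c -> b = c -> b <= a.
Proof. lia. Qed.

Lemma Zgen m (rho : ptmap m -> ptmap m -> Prop) (hm : 0 < m) (hrho : congruence_OR rho)
  (s t : ptmap m) : rho s (empty_map m) -> rk s <= m -> inOR t -> rk t <= rk s ->
  (rk t < m \/ typeI (dom t) = typeI (dom s)) -> rho t (empty_map m).
Proof.
case: hrho => hOR hrefl hsym htr hmul.
move=> hrs hsm htOR hts hty.
have [hsOR _] := hOR _ _ hrs.
have [iss ads ais tys] := inOR_small hm hsOR hsm.
have htm : rk t <= m by apply: leq_trans hsm.
have [it adt ait _] := inOR_small hm htOR htm.
have [g [ig dg sg]] := exists_inj (D := dom t) (E := dom s) hts.
have rkg : rk g = rk t by rewrite /rk dg.
have gOR : inOR g.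
  case: (ltnP (rk t) m) => hl.
    by apply: inOR_mk1 => //; rewrite ?dg ?rkg //; exact: adm'_sub sg ads.
  have et : rk t = m by apply/eqP; rewrite eqn_leq htm hl.
  have es : rk s = m by apply: (nat_sq et).
  have ig' : img g = dom s.
    by apply: eq_card_sub => //; rewrite card_img // -/(rk s) rkg es et.
  apply: inOR_mk2 => //; rewrite ?dg ?ig' ?rkg //.
  by case: hty => //; rewrite et ltnn.
pose mu := pmul g s.
have imu : pinjective mu by apply: pmul_inj.
have dmu : dom mu = dom t by rewrite /mu dom_pmul_sub // dg.
have smu : img mu \subset img s by apply: img_pmul_sub.
have rkmu : rk mu = rk t by rewrite /rk dmu.
have nOR : inOR (pinv mu).
  have rkn : rk (pinv mu) = rk t by rewrite /rk dom_pinv // card_img.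
  case: (ltnP (rk t) m) => hl.
    apply: inOR_mk1; rewrite ?dom_pinv ?img_pinv ?rkn ?pinv_inj ?dmu //.
    exact: adm'_sub smu ais.
  have et : rk t = m by apply/eqP; rewrite eqn_leq htm hl.
  have es : rk s = m by apply: (nat_sq et).
  have im' : img mu = img s.
    by apply: eq_card_sub => //; rewrite !card_img // rkmu es et.
  apply: inOR_mk2; rewrite ?dom_pinv ?img_pinv ?rkn ?pinv_inj ?dmu ?im' //.
  rewrite -tys //; case: hty => //; by rewrite et ltnn.
have e : pmul (pmul (pmul g s) (pinv mu)) t = t.
  by rewrite -/mu pmul_pinv // dmu pid_doml.
rewrite -e.
have h1 : rho (pmul g s) (empty_map m) by have [+ _] := hmul _ _ _ hrs gOR; rewrite pmul0r.
have h2 : rho (pmul (pmul g s) (pinv mu)) (empty_map m).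
  by have [_ +] := hmul _ _ _ h1 nOR; rewrite pmul0l.
by have [_ +] := hmul _ _ _ h2 htOR; rewrite pmul0l.
Qed.

Lemma ffun_neq m (f g : ptmap m) : f <> g -> exists x, f x != g x.
Proof.
move=> hne; case: (boolP [exists x, f x != g x]) => [/existsP//|/existsPn h].
by exfalso; apply: hne; apply/ffunP => x; apply/eqP; move/negPn: (h x).
Qed.

Lemma Pind m (rho : ptmap m -> ptmap m -> Prop) (hm : 0 < m) (hrho : congruence_OR rho) :
  forall k (A : {set 'I_(m.*2)}) (phi : ptmap m), adm' A -> #|A| = k -> k <= m ->
  rho (pid A) phi -> (forall x, phi x != None -> x \in A) ->
  (forall x y, phi x = Some y -> y \in A) -> phi <> pid A ->
  forall t, inOR t -> rk t < k -> rho t (empty_map m).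
Proof.
have hrho' := hrho; case: hrho' => hOR hrefl hsym htr hmul.
elim=> [//|k IH] A phi hA hcA hkm hr hdom himg hne t ht hrk.
case: (posnP k) => [k0|kpos].
  have -> : t = empty_map m by apply: rk0; move: hrk; rewrite k0; case: (rk t).
  exact: hrefl (inOR_empty hm).
have [x hx] := ffun_neq hne.
have xA : x \in A.
  apply/negPn/negP => xnA; move: hx; rewrite pidE (negbTE xnA) => hx.
  by move: (hdom x hx); rewrite (negbTE xnA).
move: hx; rewrite pidE xA => hx.
have [y [yA yx hxy]] : exists y, [/\ y \in A, y != x & (phi x = None \/ phi x = Some y)].
  case E: (phi x) => [z|].
    exists z; split; [exact: himg E | | by right].
    by apply/eqP => ezx; move: hx; rewrite E ezx eqxx.
  have : 0 < #|A :\ x|.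
    by move: hcA; rewrite (cardsD1 x A) xA add1n => -[->].
  rewrite card_gt0 => /set0Pn [z]; rewrite !inE => /andP[zx zA].
  by exists z; split => //; left.
set A' := A :\ y.
have hcA' : #|A'| = k by move: hcA; rewrite (cardsD1 y A) yA add1n => -[].
have hsA' : A' \subset A by apply: subD1set.
have hA' : adm' A' by apply: adm'_sub hsA' hA.
have hkm' : k <= m by apply: ltnW.
have pOR : inOR (pid A') by apply: inOR_pid; rewrite ?hcA'.
have xA' : x \in A' by rewrite !inE eq_sym yx xA.
pose psi := pmul (pmul (pid A') phi) (pid A').
have hr' : rho (pid A') psi.
  have [h1 _] := hmul _ _ _ hr pOR.
  have [_ h2] := hmul _ _ _ h1 pOR.
  suff <- : pmul (pmul (pid A') (pid A)) (pid A') = pid A' by [].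
  rewrite !pid_pid; congr pid; apply/setP => z; rewrite !inE.
  by case: (z == y); case: (z \in A).
have psix : psi x = None.
  rewrite /psi !pmulE pidE xA'.
  case: hxy => ->; rewrite ?pidE //.
  by rewrite !inE eqxx.
have hdom' : forall z, psi z != None -> z \in A'.
  move=> z; rewrite /psi !pmulE pidE; by case: ifP.
have himg' : forall z w, psi z = Some w -> w \in A'.
  move=> z w; rewrite /psi !pmulE; case: (pid A' z) => // u; case: (phi u) => // v.
  by rewrite pidE; case: ifP => // h [<-].
have hne' : psi <> pid A'.
  by move/ffunP => /(_ x); rewrite psix pidE xA'.
have [psiOR _] := hOR _ _ (hsym _ _ hr').
have hpsi0 : rho psi (empty_map m).
  apply: (IH A' psi hA' hcA' hkm' hr' hdom' himg' hne' psi psiOR).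
  rewrite -hcA' /rk; apply: proper_card; apply/properP; split.
    by apply/subsetP => z; rewrite domE; apply: hdom'.
  by exists x => //; rewrite domE psix.
have hp0 : rho (pid A') (empty_map m) by apply: htr hr' hpsi0.
apply: (Zgen hm hrho hp0); rewrite ?rk_pid ?hcA' //.
by left; rewrite ltnS in hrk; exact: leq_ltn_trans hrk hkm.
Qed.

Lemma Case1 m (rho : ptmap m -> ptmap m -> Prop) (hm : 0 < m) (hrho : congruence_OR rho)
  (sigma tau : ptmap m) : inOR sigma -> rk sigma <= m -> rho sigma tau ->
  pmul (pmul (pid (dom sigma)) tau) (pid (img sigma)) <> sigma ->
  forall t, inOR t -> rk t < rk sigma -> rho t (empty_map m).
Proof.
have hrho' := hrho; case: hrho' => hOR hrefl hsym htr hmul.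
move=> hs hsm hr hne.
have [iss ads ais tys] := inOR_small hm hs hsm.
set A := dom sigma; set B := img sigma.
have eA : inOR (pid A) by apply: inOR_pid.
have eB : inOR (pid B) by apply: inOR_pid; rewrite // /B card_img.
set tau' := pmul (pmul (pid A) tau) (pid B).
have hr1 : rho sigma tau'.
  have [h1 _] := hmul _ _ _ hr eA.
  have [_ h2] := hmul _ _ _ h1 eB.
  by move: h2; rewrite pid_doml pid_imgr.
have pOR : inOR (pinv sigma).
  have rkn : rk (pinv sigma) = rk sigma by rewrite /rk dom_pinv // card_img.
  case: (ltnP (rk sigma) m) => hl.
    by apply: inOR_mk1; rewrite ?dom_pinv ?img_pinv ?rkn ?pinv_inj.
  have e : rk sigma = m by apply/eqP; rewrite eqn_leq hsm hl.
  by apply: inOR_mk2; rewrite ?dom_pinv ?img_pinv ?rkn ?pinv_inj // tys.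
set phi := pmul tau' (pinv sigma).
have hr2 : rho (pid A) phi.
  have [_ h] := hmul _ _ _ hr1 pOR.
  by move: h; rewrite pmul_pinv.
have hne' : phi <> pid A.
  move=> ephi; apply: hne; rewrite -/tau'.
  have : img tau' \subset B.
    by apply: subset_trans (img_pmul_sub _ _) _; rewrite img_pid.
  move/pid_imgr => <-.
  by rewrite -(pinv_pmul iss) -pmulA -/phi ephi pid_doml.
apply: (Pind hm hrho (k := #|A|) (A := A) (phi := phi)) => //.
- move=> x hx; have : x \in dom phi by rewrite domE.
  move/(subsetP (dom_pmul_subl _ _))/(subsetP (dom_pmul_subl _ _)).
  move/(subsetP (dom_pmul_subl _ _)); by rewrite dom_pid.
- move=> x y hxy; have : y \in img phi by apply/imgP; exists x.
  move/(subsetP (img_pmul_sub _ _)); by rewrite img_pinv.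
Qed.

Lemma Main m (rho : ptmap m -> ptmap m -> Prop) (hm : 0 < m) (hrho : congruence_OR rho)
  (sigma tau : ptmap m) : inOR sigma -> rk sigma <= m -> rho sigma tau -> sigma <> tau ->
  forall t, inOR t -> rk t < rk sigma -> rho t (empty_map m).
Proof.
have hrho' := hrho; case: hrho' => hOR hrefl hsym htr hmul.
move=> hs hsm hr hne.
have [iss ads ais tys] := inOR_small hm hs hsm.
set A := dom sigma.
case: (eqVneq (pmul (pmul (pid A) tau) (pid (img sigma))) sigma) => he; last first.
  by apply: (Case1 hm hrho hs hsm hr); apply/eqP.
have agree : forall x, x \in A -> tau x = sigma x.
  move=> x hx; move/ffunP: he => /(_ x); rewrite !pmulE pidE hx.
  case: (tau x) => [c|] /=; last by move=> h; move: hx; rewrite /A domE -h.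
  rewrite pidE; case: ifP => // _ h; by move: hx; rewrite /A domE -h.
have [z hz] := ffun_neq hne.
have zA : z \notin A by apply/negP => /agree h; move: hz; rewrite h eqxx.
have sz : sigma z = None by apply/eqP; move: zA; rewrite /A domE negbK.
have tz : tau z != None by move: hz; rewrite sz eq_sym.
have [_ tOR] := hOR _ _ hr.
case: (boolP (tot tau)) => htot.
- case: (posnP (rk sigma)) => [->//|rpos].
  set TA := @theta m @: A.
  have eT : inOR (pid TA) by apply: inOR_pid; rewrite ?card_theta //; apply: adm'_theta.
  pose u := pmul (pid TA) tau.
  have hu : rho u (empty_map m).
    apply: hsym; have [h _] := hmul _ _ _ hr eT.
    suff <- : pmul (pid TA) sigma = empty_map m by [].
    apply/ffunP => x; rewrite pmulE pidE !ffunE; case: ifP => // hx.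
    apply/eqP; rewrite -[_ == _]negbK -domE; apply/negP => hxA.
    by move/adm'P: ads => /(_ x hxA); apply; rewrite -mem_theta.
  have [uOR _] := hOR _ _ hu.
  have du : dom u = TA.
    rewrite /u dom_pmul_sub ?dom_pid //; apply/subsetP => x _.
    by rewrite domE; move/forallP: htot; apply.
  have ru : rk u = rk sigma by rewrite /rk du card_theta.
  move=> t ht hrt.
  have hum : rk u <= m by rewrite ru.
  apply: (Case1 hm hrho uOR hum hu _ ht); last by rewrite ru.
  rewrite pmul0r pmul0l => eu.
  have d0 : dom (empty_map m) = set0 by apply/setP => x; rewrite domE ffunE inE.
  by move: rpos; rewrite -ru -eu /rk d0 cards0.
- have htm := inOR_ntot hm tOR htot.
  move=> t ht hrt; apply: (Case1 hm hrho tOR htm (hsym _ _ hr)) => //.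
    by move/ffunP => /(_ z); rewrite !pmulE pidE domE tz sz => e; move: tz; rewrite -e.
  apply: ltn_trans hrt _; rewrite /rk; apply: proper_card; apply/properP; split.
    by apply/subsetP => x hx; rewrite domE agree // -domE.
  by exists z; rewrite // domE.
Qed.

Lemma nat_th (m a : nat) : a < m.*2 -> a = m.*2 - a.+1 -> False.
Proof. rewrite -addnn; lia. Qed.
Lemma nat_dbl (m : nat) : 0 < m -> m.*2 <= m -> False.
Proof. rewrite -addnn; lia. Qed.
Lemma theta_neq m (x : 'I_(m.*2)) : x != theta x.
Proof.
apply/negP => /eqP /(congr1 val); rewrite theta_val; exact: nat_th (ltn_ord x).
Qed.

Theorem lemma4p8 (m : nat) (hm : 0 < m) (rho : ptmap m -> ptmap m -> Prop)
  (hrho : congruence_OR rho) (sigma tau : ptmap m) :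
  inOR sigma -> inOR tau -> tau <> sigma -> rho tau sigma ->
  (rk sigma = m.*2 ->
     (forall t, in_ImI t -> rho t (empty_map m)) \/
     (forall t, in_ImII t -> rho t (empty_map m))) /\
  (rk sigma <= m ->
     (* rho(0) contains I_{k-1}, with I_{-1} empty *)
     forall t, inOR t -> rk t < rk sigma -> rho t (empty_map m)).
Proof.
have hrho' := hrho; case: hrho' => hOR hrefl hsym htr hmul.
move=> hs ht hne hr'; have hr := hsym _ _ hr'.
have hne' : sigma <> tau by move=> e; apply: hne; rewrite e.
split; last first.
  move=> hsm; exact: (Main hm hrho hs hsm hr hne').
move=> hsn.
have htot : tot sigma.
  apply/negPn/negP => hnt; have := inOR_ntot hm hs hnt; rewrite hsn.
  exact: nat_dbl.
have [x hx] := ffun_neq hne'.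
have iss : pinjective sigma by case/andP: hs.
have [C [xC adC cC hC]] : exists C : {set 'I_(m.*2)},
    [/\ x \in C, adm' C, #|C| = m & forall c, c \in C -> sigma c != tau x].
  case: (boolP [exists y, sigma y == tau x]) => [/existsP [y /eqP hy]|/existsPn hn].
    have xy : x != y by apply/negP => /eqP exy; rewrite -exy in hy; move: hx; rewrite hy eqxx.
    have [C [h1 h2 h3 h4]] := ext_adm xy.
    exists C; split => // c hc; apply/negP => /eqP hcy.
    have sy : sigma y != None by move/forallP: htot; apply.
    case E: (sigma y) sy hy => [b|] // _ hy.
    rewrite -hy in hcy; have ecy := (pinjP _ iss) _ _ _ hcy E.
    by move/adm'P: h3 => /(_ y); apply; rewrite // -ecy.
  have [C [h1 h2 h3 h4]] := ext_adm (theta_neq x).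
  by exists C; split => // c _; apply: hn.
have eC : inOR (pid C) by apply: inOR_pid; rewrite ?cC.
pose al := pmul (pid C) sigma.
have hal : rho al (pmul (pid C) tau) by have [h _] := hmul _ _ _ hr eC.
have [alOR _] := hOR _ _ hal.
have dal : dom al = C.
  rewrite /al dom_pmul_sub ?dom_pid //; apply/subsetP => y _.
  by rewrite domE; move/forallP: htot; apply.
have ral : rk al = m by rewrite /rk dal.
have ralm : rk al <= m by rewrite ral.
have [ial adal aial tyal] := inOR_small hm alOR ralm.
have eB : inOR (pid (img al)) by apply: inOR_pid; rewrite // card_img // ral.
pose be := pmul (pmul (pid C) tau) (pid (img al)).
have hbe : rho al be.
  have [_ h] := hmul _ _ _ hal eB; by move: h; rewrite pid_imgr.
have bex : be x = None.
  rewrite /be !pmulE pidE xC; case E: (tau x) => [b|] //; rewrite pidE.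
  case: ifP => // /imgP [c]; rewrite /al pmulE pidE.
  case: ifP => // hc hcb; by move: (hC c hc); rewrite hcb E eqxx.
have alx : al x != None by rewrite -domE dal.
have hne2 : al <> be by move=> e; move: alx; rewrite e bex.
have [_ beOR] := hOR _ _ hbe.
have I0 := Main hm hrho alOR ralm hbe hne2.
have rbe : rk be < rk al.
  rewrite /rk dal; apply: proper_card; apply/properP; split.
    apply/subsetP => y; rewrite domE /be !pmulE pidE; by case: ifP.
  by exists x; rewrite // domE bex.
have al0 : rho al (empty_map m) by apply: htr hbe (I0 _ beOR rbe).
case: (boolP (typeI (dom al))) => hty; [left|right] => t /andP[tOR hh].
- apply: (Zgen hm hrho al0 ralm tOR).
    by rewrite ral; case/orP: hh => [/ltnW //|/andP[/eqP -> _]].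
  by case/orP: hh => [|/andP[_ h]]; [left | right; rewrite hty h].
- apply: (Zgen hm hrho al0 ralm tOR).
    by rewrite ral; case/orP: hh => [/ltnW //|/andP[/eqP -> _]].
  by case/orP: hh => [|/andP[_ h]]; [left | right; rewrite (negbTE hty) (negbTE h)].
Qed.
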